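(* Let $k\geq 1$ and let $T$ be a binary phylogenetic $X$-tree with $|X| = 2k$. If $\mathcal{P}=\{P_1,\ldots,P_k\}$ and $\mathcal{Q}=\{Q_1,\ldots,Q_k\}$ are both sets of $k$ pairwise edge-disjoint leaf-to-leaf paths in $T$, then $\mathcal{P}=\mathcal{Q}$; i.e., $T$ has exactly one set of $k$ pairwise edge-disjoint leaf-to-leaf paths.
   Context: A phylogenetic $X$-tree is a tree with no vertices of degree 2 whose leaves are bijectively labelled by (and identified with) $X$; binary means maximum degree 3. A leaf-to-leaf path is a path whose two endpoints are (distinct) leaves; paths are considered unordered (a path and its reverse are the same). *)

(* Defs.v *)
(* Finite simple graphs as symmetric irreflexive relations. *)
From mathcomp Require Import all_boot.
Set Implicit Arguments. Unset Strict Implicit. Unset Printing Implicit Defensive.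

Section Trees.
Variable V : finType.
Variable e : rel V.

Definition degree (v : V) : nat := #|[set w | e v w]|.

Definition is_leaf (v : V) : bool := degree v == 1.
Definition leaves : {set V} := [set v | is_leaf v].

Definition has_cycle : Prop :=
  exists (x : V) (p : seq V),
    [/\ path e x p, uniq (x :: p), 2 <= size p & e (last x p) x].

Definition is_tree : Prop :=
  [/\ symmetric e, irreflexive e, (forall x y, connect e x y) & ~ has_cycle].

(* binary phylogenetic tree (leaf set X = leaves): a tree with no vertex of
   degree 2 and maximum degree at most 3 *)
Definition binary_phylo_tree : Prop :=
  [/\ is_tree, (forall v, degree v != 2) & (forall v, degree v <= 3)].

(* the edge set traversed by the vertex sequence x :: p;
   an edge {a,b} is represented by the 2-element set [set a; b] *)
Definition path_edges (x : V) (p : seq V) : {set {set V}} :=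
  [set [set z.1; z.2] | z in zip (x :: p) p].

(* an (unordered) leaf-to-leaf path, represented by its edge set: some
   simple path x :: p between two distinct leaves traverses exactly S.
   A path and its reverse give the same edge set. *)
Definition leaf_to_leaf_path (S : {set {set V}}) : Prop :=
  exists (x : V) (p : seq V),
    [/\ path e x p, uniq (x :: p), is_leaf x && is_leaf (last x p),
        x != last x p & S = path_edges x p].

Definition edge_disjoint_path_system (k : nat) (P : {set {set {set V}}}) : Prop :=
  [/\ #|P| = k,
      {in P, forall S, leaf_to_leaf_path S} &
      ({in P &, forall S1 S2 : {set {set V}}, S1 != S2 -> [disjoint S1 & S2]})].

End Trees.

(* Main.v *)
Require Import Defs.
From mathcomp Require Import all_boot zify.
Set Implicit Arguments. Unset Strict Implicit. Unset Printing Implicit Defensive.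

Section P.
Variable V : finType.
Variable e : rel V.
Implicit Types (x y v : V) (p : seq V) (E : {set V}) (D : {set {set V}}).

Definition inc (D : {set {set V}}) v := [set E in D | v \in E].

Lemma path_edges_nil x : path_edges x [::] = set0.
Proof. by apply/setP => E; rewrite inE; apply/imsetP => -[z]. Qed.

Lemma path_edges_cons x y p :
  path_edges x (y :: p) = [set x; y] |: path_edges y p.
Proof.
apply/setP => E; rewrite !inE; apply/idP/idP.
  case/imsetP=> z; rewrite /= inE => /orP [/eqP -> -> | zi ->]; first by rewrite /= eqxx.
  by apply/orP; right; apply/imsetP; exists z.
rewrite /path_edges; case/orP=> [/eqP ->|/imsetP [z zi ->]]; first by apply/imsetP; exists (x, y); rewrite //= inE eqxx.
by apply/imsetP; exists z => //=; rewrite inE zi orbT.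
Qed.

Lemma path_edges_graph x p E :
  path e x p -> E \in path_edges x p -> exists a b, e a b /\ E = [set a; b].
Proof.
elim: p x => [|y p IH] x; first by rewrite path_edges_nil inE.
rewrite path_edges_cons /= !inE => /andP [exy pp] /orP [/eqP ->|].
  by exists x, y.
by apply: IH.
Qed.

Lemma path_edges_vert x p E v :
  E \in path_edges x p -> v \in E -> v \in x :: p.
Proof.
elim: p x => [|y p IH] x; first by rewrite path_edges_nil inE.
rewrite path_edges_cons !inE => /orP [/eqP ->|H] vE.
  by move: vE; rewrite !inE => /orP [->|->]; rewrite ?orbT.
by move: (IH _ H vE); rewrite inE => ->; rewrite orbT.
Qed.

Lemma inc_U1 (E0 : {set V}) D v : E0 \notin D ->
  #|inc (E0 |: D) v| = (v \in E0) + #|inc D v|.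
Proof.
move=> nE0.
have -> : inc (E0 |: D) v = (if v \in E0 then [set E0] else set0) :|: inc D v.
  apply/setP => E; rewrite !inE; case vE0: (v \in E0); rewrite ?inE.
    by case: (E =P E0) => [->|] //=; rewrite vE0.
  by case: (E =P E0) => [->|] //=; rewrite vE0 andbF.
rewrite cardsU.
have -> : (if v \in E0 then [set E0] else set0) :&: inc D v = set0.
  apply/setP => E; rewrite !inE; case: (v \in E0); rewrite ?inE //.
  by case: (E =P E0) => [->|]; rewrite ?(negbTE nE0).
by rewrite cards0 subn0; case: (v \in E0); rewrite ?cards1 ?cards0.
Qed.

Lemma deg_path x p v : uniq (x :: p) ->
  #|inc (path_edges x p) v| = (v \in belast x p) + (v \in p).
Proof.
elim: p x => [|y p IH] x.
  by rewrite path_edges_nil /inc; move=> _; apply/eqP; rewrite cards_eq0; apply/eqP/setP => E; rewrite !inE.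
move=> U; have U' : uniq (y :: p) by case/andP: U.
rewrite path_edges_cons inc_U1; last first.
  apply/negP => /path_edges_vert /(_ (set21 x y)).
  by case/andP: U => /negP.
rewrite IH // /= !inE.
move: U; rewrite /= !inE => /and3P [/norP [xy xp] yp _].
have xb : x \notin belast y p by apply/negP => /mem_belast; rewrite inE (negbTE xy) (negbTE xp).
case: (v =P x) => [->|vx]; first by rewrite (negbTE xb) (negbTE xy) (negbTE xp).
case: (v =P y) => [->|vy] /=; last by [].
by rewrite (negbTE yp); lia.
Qed.


Definition gset D := forall E, E \in D -> exists a b, e a b /\ E = [set a; b].

Lemma inc_graph_le D v : symmetric e -> gset D -> #|inc D v| <= degree e v.
Proof.
move=> sym gD; rewrite /degree.
apply: leq_trans (leq_imset_card (fun w => [set v; w]) _).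
apply: subset_leq_card; apply/subsetP => E; rewrite !inE => /andP [ED vE].
have [a [b [eab Eab]]] := gD E ED; rewrite Eab in vE *.
move: vE; rewrite !inE => /orP [/eqP ->|/eqP ->].
  by apply/imsetP; exists b; rewrite ?inE.
by apply/imsetP; exists a; [rewrite inE sym | rewrite setUC].
Qed.

Lemma gset_path x p : path e x p -> gset (path_edges x p).
Proof. by move=> pp E; apply: path_edges_graph. Qed.

Lemma ltl_gset S : leaf_to_leaf_path e S -> gset S.
Proof. by case=> x [p [pp _ _ _ ->]]; apply: gset_path. Qed.

Lemma ltl_nonleaf S v : leaf_to_leaf_path e S -> ~~ is_leaf e v ->
  #|inc S v| = 0 \/ #|inc S v| = 2.
Proof.
case=> x [p [pp U /andP [lx ll] xl ->]] nl.
rewrite deg_path //.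
case vb: (v \in belast x p); case vp: (v \in p); [by right|exfalso|exfalso|by left].
  have : v \in x :: p by apply: mem_belast vb.
  rewrite inE vp orbF => /eqP vx; by rewrite vx lx in nl.
have : v \in rcons (belast x p) (last x p) by rewrite -lastI inE vp orbT.
rewrite mem_rcons inE vb orbF => /eqP vl; by rewrite vl ll in nl.
Qed.

Lemma ltl_leaves S : leaf_to_leaf_path e S ->
  2 <= \sum_(l in leaves e) #|inc S l|.
Proof.
case=> x [p [pp U /andP [lx ll] xl ->]].
case: p pp U ll xl => [|y p] pp U ll xl; first by rewrite eqxx in xl.
have lxi : x \in leaves e by rewrite inE.
have lli : last x (y :: p) \in leaves e by rewrite inE.
rewrite (bigD1 x) //= (bigD1 (last x (y :: p))) /=; last by rewrite lli eq_sym xl.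
rewrite !deg_path // /= !inE eqxx /=.
have := mem_last y p; rewrite inE => ->.
by rewrite ?orbT; lia.
Qed.

End P.

Lemma card_bigcup_disj (I T : finType) (f : I -> {set T}) (A : {set I}) :
  {in A &, forall i j, i != j -> [disjoint f i & f j]} ->
  #|\bigcup_(i in A) f i| = \sum_(i in A) #|f i|.
Proof.
move: {2}#|A| (erefl #|A|) => n; elim: n A => [|n IH] A cA dA.
  move/eqP: cA; rewrite cards_eq0 => /eqP ->.
  by rewrite !big_set0 cards0.
case: (set_0Vmem A) => [A0|[i iA]]; first by rewrite A0 cards0 in cA.
rewrite (big_setD1 i) //= [in RHS](big_setD1 i) //= cardsU.
have -> : f i :&: \bigcup_(j in A :\ i) f j = set0.
  apply/disjoint_setI0/bigcup_disjoint => j; rewrite !inE => /andP [ji jA].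
  by apply: dA => //; rewrite eq_sym.
rewrite cards0 subn0 IH //.
  by move: cA; rewrite (cardsD1 i) iA add1n => -[].
by move=> a b; rewrite !inE => /andP [_ aA] /andP [_ bA]; apply: dA.
Qed.

Section S.
Variable V : finType.
Variable e : rel V.
Implicit Types (x y v : V) (p : seq V) (E : {set V}) (D : {set {set V}}) (P Q : {set {set {set V}}}).

Definition UP P := \bigcup_(S in P) S.

Lemma card_inc_U k P v : edge_disjoint_path_system e k P ->
  #|inc (UP P) v| = \sum_(S in P) #|inc S v|.
Proof.
case=> _ _ dP.
have -> : inc (UP P) v = \bigcup_(S in P) inc S v.
  apply/setP => E; rewrite !inE; apply/andP/bigcupP.
    by case=> /bigcupP [S SP ES] vE; exists S; rewrite // inE ES.
  by case=> S SP; rewrite inE => /andP [ES vE]; split=> //; apply/bigcupP; exists S.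
apply: card_bigcup_disj => S1 S2 S1P S2P ne.
move: (dP S1 S2 S1P S2P ne); rewrite -!setI_eq0 => /eqP d0.
apply/eqP/setP => E; rewrite !inE.
apply/negP => /andP [/andP [E1 _] /andP [E2 _]].
by move/setP: d0 => /(_ E); rewrite !inE E1 E2.
Qed.

Lemma gset_U k P : edge_disjoint_path_system e k P -> gset e (UP P).
Proof.
case=> _ lP _ E /bigcupP [S SP ES].
exact: (ltl_gset (lP S SP)).
Qed.

Lemma nonleaf_even k P v : edge_disjoint_path_system e k P -> ~~ is_leaf e v ->
  ~~ odd #|inc (UP P) v|.
Proof.
move=> sP nl; rewrite (card_inc_U v sP) -dvdn2.
apply: dvdn_sum => S SP.
case: sP => _ lP _.
by case: (ltl_nonleaf (lP S SP) nl) => ->.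
Qed.

Lemma leaf_full k P l : symmetric e -> edge_disjoint_path_system e k P ->
  #|leaves e| = 2 * k -> l \in leaves e -> #|inc (UP P) l| = 1.
Proof.
move=> sym sP cL lL.
have le1 : forall l, l \in leaves e -> #|inc (UP P) l| <= 1.
  move=> l' l'L; apply: leq_trans (inc_graph_le _ sym (gset_U sP)) _.
  by move: l'L; rewrite inE => /eqP ->.
have tot : 2 * k <= \sum_(l in leaves e) #|inc (UP P) l|.
  under eq_bigr => l' _ do rewrite (card_inc_U l' sP).
  rewrite exchange_big /=.
  case: sP => cP lP _.
  apply: leq_trans (_ : \sum_(S in P) 2 <= _).
    by rewrite sum_nat_const cP mulnC.
  by apply: leq_sum => S SP; apply: ltl_leaves (lP S SP).
apply/eqP; rewrite eqn_leq le1 //=; rewrite lt0n; apply/negP => /eqP z.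
move: tot; rewrite (bigD1 l) //= z add0n -cL (cardsD1 l (leaves e)) lL.
have h1 : \sum_(i in leaves e | i != l) #|inc (UP P) i| <= \sum_(i in leaves e | i != l) 1.
  by apply: leq_sum => i /andP [iL _]; apply: le1.
rewrite sum1_card in h1.
have h2 : #|[pred i | (i \in leaves e) && (i != l)]| = #|leaves e :\ l|.
  by apply: eq_card => i; rewrite !inE andbC.
move: h1; rewrite h2 => a b; have := leq_trans b a; by rewrite add1n ltnn.
Qed.



Lemma set2_eq (T : finType) (a b c d : T) :
  [set a; b] = [set c; d] -> (a = c /\ b = d) \/ (a = d /\ b = c).
Proof.
move=> H.
have Ha : a \in [set c; d] by rewrite -H set21.
have Hb : b \in [set c; d] by rewrite -H set22.
have Hc : c \in [set a; b] by rewrite H set21.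
have Hd : d \in [set a; b] by rewrite H set22.
move: Ha Hb Hc Hd; rewrite !inE.
by do 4 (case/orP => /eqP ?); subst; auto.
Qed.

Lemma even_empty D : symmetric e -> irreflexive e -> ~ has_cycle e ->
  gset e D -> (forall v, ~~ odd #|inc D v|) -> D = set0.
Proof.
move=> sym irr nc gD ev.
pose eD a b := [set a; b] \in D.
have eDe : forall a b, eD a b -> e a b.
  move=> a b abD; have [c [d [ecd Ecd]]] := gD _ abD.
  by case: (set2_eq Ecd) => -[-> ->] //; rewrite sym.
have key : forall m x p, #|V| - size p <= m -> p != [::] -> path eD x p ->
    uniq (x :: p) -> False.
  elim=> [|m IH] x p hm pn pp U.
    have := max_card (mem (x :: p)); move/card_uniqP: U => ->; rewrite /= => h; move: hm; rewrite leqn0 subn_eq0 => h'; by have := leq_trans h h'; rewrite ltnn.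
  case/lastP: p hm pn pp U => [|p' v] hm pn pp U; first by rewrite eqxx in pn.
  set u := last x p'.
  have euv : eD u v by move: pp; rewrite rcons_path => /andP [].
  have uvI : [set u; v] \in inc D v by rewrite inE set22 andbT.
  have c2 : 1 < #|inc D v|.
    have := ev v; have : 0 < #|inc D v| by apply/card_gt0P; exists [set u; v].
    case: #|inc D v| => [|[|n]] //.
  have [E' E'I E'ne] : exists2 E', E' \in inc D v & E' != [set u; v].
    move: c2; rewrite (cardsD1 [set u; v]) uvI add1n ltnS => /card_gt0P [E'].
    by rewrite !inE => /andP [ne H]; exists E'; rewrite ?inE.
  move: E'I; rewrite inE => /andP [E'D vE'].
  have [w [evw Ew]] : exists w, eD v w /\ E' = [set v; w].
    have [a [b [eab Eab]]] := gD _ E'D.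
    move: vE'; rewrite Eab !inE => /orP [/eqP va|/eqP vb].
      by exists b; rewrite /eD va -Eab.
    by exists a; rewrite /eD vb setUC -Eab.
  have wu : w != u by apply: contra E'ne => /eqP wu; rewrite Ew wu setUC.
  have wv : w != v by apply/eqP => wv; move: (eDe _ _ evw); rewrite wv irr.
  case win : (w \in x :: rcons p' v).
    have : w \in x :: p' by move: win; rewrite -rcons_cons mem_rcons inE (negbTE wv).
    move=> wi; rewrite /u in wu; move: pp U wu; case/splitPl: wi => p1 p2 wl pp U wu.
    apply: nc; exists w, (rcons p2 v).
    move: pp U; rewrite rcons_cat cat_path wl => /andP [_ pp2].
    rewrite -cat_cons cat_uniq => /and3P [_ nh u2].
    split.
    - by apply: sub_path pp2.
    - rewrite /= u2 andbT; apply: contra nh => wi; apply/hasP; exists w => //.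
      by rewrite -wl mem_last.
    - case: p2 pp2 u2 nh wu => [|z p2] //=; first by rewrite cats0 wl eqxx.
      by rewrite size_rcons.
    - by rewrite last_rcons; apply: eDe evw.
  apply: (IH x (rcons (rcons p' v) w)).
  - by move: hm; rewrite !size_rcons !subnS; case: (#|V| - size p') => [|[|n]].
  - by case: (rcons p' v).
  - by rewrite rcons_path pp last_rcons evw.
  - by rewrite -rcons_cons rcons_uniq win U.
apply/eqP; apply: contraT => /set0Pn [E0 E0D].
have [a [b [eab Eab]]] := gD _ E0D.
exfalso; apply: (key #|V| a [:: b]).
- by lia.
- by [].
- by rewrite /= andbT /eD -Eab.
- by rewrite /= inE andbT; apply/eqP => ab; move: eab; rewrite ab irr.
Qed.


Lemma closedQ k Q S v E1 E : symmetric e -> (forall v, degree e v <= 3) ->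
  edge_disjoint_path_system e k Q -> S \in Q -> E1 \in S -> v \in E1 ->
  E \in UP Q -> v \in E -> E \in S.
Proof.
move=> sym d3 sQ SQ E1S vE1 /bigcupP [S2 S2Q ES2] vE.
case: (S2 =P S) => [<-|ne] //.
have sQ' := sQ; case: sQ' => _ lQ dQ.
have dis := dQ S S2 SQ S2Q (introN eqP (nesym ne)).
have c1 : 0 < #|inc S v| by apply/card_gt0P; exists E1; rewrite inE E1S.
have c2 : 0 < #|inc S2 v| by apply/card_gt0P; exists E; rewrite inE ES2.
have le : #|inc S v| + #|inc S2 v| <= degree e v.
  apply: leq_trans (inc_graph_le _ sym (gset_U sQ)).
  have -> : #|inc S v| + #|inc S2 v| = #|inc S v :|: inc S2 v|.
    rewrite cardsU.
    have -> : inc S v :&: inc S2 v = set0.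
      apply/setP => F; rewrite !inE; apply/negP => /andP [/andP [F1 _] /andP [F2 _]].
      by move: dis; rewrite -setI_eq0 => /eqP /setP /(_ F); rewrite !inE F1 F2.
    by rewrite cards0 subn0.
  apply: subset_leq_card; apply/subsetP => F; rewrite !inE.
  case/orP => /andP [FS vF]; rewrite vF andbT; apply/bigcupP; [exists S | exists S2] => //.
case lv : (is_leaf e v).
  by move: le; move/eqP: lv => ->; lia.
have nl : ~~ is_leaf e v by rewrite lv.
case: (ltl_nonleaf (lQ S SQ) nl) => h1; first by rewrite h1 in c1.
case: (ltl_nonleaf (lQ S2 S2Q) nl) => h2; first by rewrite h2 in c2.
by have := d3 v; move: le; rewrite h1 h2; lia.
Qed.

Lemma propagate (S U : {set {set V}}) x p :
  (forall v E1 E, E1 \in S -> v \in E1 -> E \in U -> v \in E -> E \in S) ->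
  path_edges x p \subset U ->
  (exists z E1, [/\ z \in x :: p, E1 \in S & z \in E1]) ->
  path_edges x p \subset S.
Proof.
move=> cl.
elim: p x => [|y p IH] x; first by rewrite path_edges_nil => _ _; apply: sub0set.
rewrite path_edges_cons subUset sub1set => /andP [xyU pU] [z [E1 [zin E1S zE1]]].
have touchy : exists E2, E2 \in S /\ y \in E2.
  move: zin; rewrite inE => /orP [/eqP zx|zin].
    exists [set x; y]; split; last by rewrite set22.
    by apply: (cl z E1) => //; rewrite zx set21.
  have sub := IH y pU (ex_intro _ z (ex_intro _ E1 (And3 zin E1S zE1))).
  case: p zin sub {IH pU} => [|q p] zin sub.
    by exists E1; move: zin; rewrite inE => /eqP <-.
  exists [set y; q]; split; last by rewrite set21.
  by apply: (subsetP sub); rewrite path_edges_cons setU11.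
case: touchy => E2 [E2S yE2].
rewrite subUset sub1set; apply/andP; split.
  by apply: (cl y E2) => //; rewrite set22.
by apply: IH => //; exists y, E2; split => //; rewrite inE eqxx.
Qed.


Lemma setDDI0 (T : finType) (X Y : {set T}) : (X :\: Y) :&: (Y :\: X) = set0.
Proof. by apply/setP => z; rewrite !inE; case: (z \in X); case: (z \in Y). Qed.

Lemma subPQ k P Q : symmetric e -> (forall v, degree e v <= 3) ->
  edge_disjoint_path_system e k P -> edge_disjoint_path_system e k Q ->
  UP P = UP Q -> P \subset Q.
Proof.
move=> sym d3 sP sQ UPQ; apply/subsetP => S SP.
have sP' := sP; case: sP' => _ lP _.
have [x [p [pp U /andP [lx ll] xl ES]]] := lP S SP.
case: p pp U ll xl ES => [|y0 p] pp U ll xl ES; first by rewrite eqxx in xl.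
have E0S : [set x; y0] \in S by rewrite ES path_edges_cons setU11.
have E0U : [set x; y0] \in UP Q by rewrite -UPQ; apply/bigcupP; exists S.
case/bigcupP: E0U => S' S'Q E0S'.
have sQ' := sQ; case: sQ' => _ lQ _.
have [y [q [pq Uq _ _ ES']]] := lQ S' S'Q.
suff -> : S = S' by [].
apply/eqP; rewrite eqEsubset; apply/andP; split.
  rewrite ES; apply: (@propagate S' (UP Q)).
  - by move=> v E1 E H1 H2 H3 H4; apply: (closedQ sym d3 sQ S'Q H1 H2 H3 H4).
  - by rewrite -ES -UPQ; apply: bigcup_sup.
  - by exists x, [set x; y0]; rewrite inE eqxx set21.
rewrite ES'; apply: (@propagate S (UP P)).
- by move=> v E1 E H1 H2 H3 H4; apply: (closedQ sym d3 sP SP H1 H2 H3 H4).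
- by rewrite -ES' UPQ; apply: bigcup_sup.
- exists x, [set x; y0]; split => //; last by rewrite set21.
  by apply: (path_edges_vert (E := [set x; y0])); rewrite ?set21 // -ES'.
Qed.

End S.

Theorem lemma7 (V : finType) (e : rel V) (k : nat) :
  1 <= k ->
  binary_phylo_tree e ->
  #|leaves e| = 2 * k ->
  forall P Q : {set {set {set V}}},
    edge_disjoint_path_system e k P ->
    edge_disjoint_path_system e k Q ->
    P = Q.
Proof.
move=> _ [[sym irr _ nc] _ d3] cL P Q sP sQ.
suff UPQ : UP P = UP Q.
  by apply/eqP; rewrite eqEsubset (subPQ sym d3 sP sQ UPQ) (subPQ sym d3 sQ sP (esym UPQ)).
pose D := (UP P :\: UP Q) :|: (UP Q :\: UP P).
have gD : gset e D.
  move=> E; rewrite !inE => /orP [/andP [_ H]|/andP [_ H]].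
    exact: (gset_U sP).
  exact: (gset_U sQ).
have ev : forall v, ~~ odd #|inc D v|.
  move=> v.
  set A := inc (UP P) v; set B := inc (UP Q) v.
  have -> : inc D v = (A :\: B) :|: (B :\: A).
    by apply/setP => E; rewrite !inE; case: (E \in UP P); case: (E \in UP Q); case: (v \in E).
  have cD : #|(A :\: B) :|: (B :\: A)| = #|A :\: B| + #|B :\: A|.
    rewrite cardsU.
    have -> : (A :\: B) :&: (B :\: A) = set0 by apply: setDDI0.
    by rewrite cards0 subn0.
  rewrite cD.
  case lv : (v \in leaves e).
    have N1 : #|inc (UP P :|: UP Q) v| <= 1.
      apply: leq_trans (inc_graph_le _ sym _) _.
        move=> E; rewrite inE => /orP [H|H]; [exact: (gset_U sP) | exact: (gset_U sQ)].
      by move: lv; rewrite inE => /eqP ->.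
    have eqN : forall X : {set {set V}}, X \subset inc (UP P :|: UP Q) v -> #|X| = 1 ->
        X = inc (UP P :|: UP Q) v.
      move=> X sX cX; apply/eqP; rewrite eqEcard sX cX //.
    have AB : A = B.
      have eA : A = inc (UP P :|: UP Q) v.
        apply: eqN; last exact: (leaf_full sym sP cL lv).
        by apply/subsetP => E; rewrite !inE => /andP [-> ->].
      have eB : B = inc (UP P :|: UP Q) v.
        apply: eqN; last exact: (leaf_full sym sQ cL lv).
        by apply/subsetP => E; rewrite !inE => /andP [-> ->]; rewrite orbT.
      by rewrite eA eB.
    by rewrite AB setDv cards0.
  have nl : ~~ is_leaf e v by move: lv; rewrite inE => ->.
  have eA := nonleaf_even sP nl; have eB := nonleaf_even sQ nl.
  rewrite -/A in eA; rewrite -/B in eB.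
  move: eA eB; rewrite -(cardsID B A) -(cardsID A B) setIC.
  rewrite -!dvdn2; lia.
have D0 := even_empty sym irr nc gD ev.
apply/eqP; rewrite eqEsubset; apply/andP; split; apply/subsetP => E EU.
  case EQ: (E \in UP Q) => //.
  have : E \in D by rewrite /D !inE EU EQ.
  by rewrite D0 inE.
case EQ: (E \in UP P) => //.
have : E \in D by rewrite /D !inE EU EQ orbT.
by rewrite D0 inE.
Qed.
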